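(* Let $\sigma : \mathcal{S} \to \mathcal{A}$ be a $\sim$-strategy; then so is $\tilde{\sigma} : \tilde{\mathcal{S}} \to \tilde{\mathcal{A}}$.
   Context: $e \rightarrow e'$ denotes immediate causal dependency in an event structure ($e<e'$ with nothing strictly between). An essp $\mathcal{A}$ is an event structure with polarities $A$ with a symmetry $\tilde A$ and open, jointly monic maps $l_A,r_A:\tilde A\to A$ forming an equivalence relation; configurations of $\tilde A$ correspond to bijections $\theta:x\cong y$ of the isomorphism family $\mathbb{S}_A$. $\tilde{\mathcal{A}}$ denotes $\tilde A$ equipped with its canonical higher symmetry, whose isomorphism family consists of bijections between $\theta,\theta'\in\mathbb{S}_A$ corresponding to commuting squares of isomorphisms in $\mathbb{S}_A$. For a map $\sigma$ of essps, $\tilde\sigma:\tilde A\to\tilde B$ is the induced map on symmetries, $\theta\mapsto\sigma\theta$. A $\sim$-strategy $\sigma:\mathcal{S}\to\mathcal{A}$ is a map of essps which is courteous (if $s_1 \rightarrow s_2$ with $\mathrm{pol}(s_1)=+$ or $\mathrm{pol}(s_2)=-$ then $\sigma s_1 \rightarrow \sigma s_2$), strong-receptive (if $\theta\in\mathbb{S}_S$ and $\sigma\theta$ extends in $\mathbb{S}_A$ by a pair $(a_1,a_2)$ of negative events, there is a unique extension $\theta\cup\{(s_1,s_2)\}\in\mathbb{S}_S$ with $\sigma s_i=a_i$), and thin ($\mathcal{S}$ is thin: whenever $\theta\in\mathbb{S}_S$ has two extensions in $\mathbb{S}_S$ by positive events only whose domains are compatible, their union is in $\mathbb{S}_S$).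 *)

(* Defs.v *)
From Stdlib Require Import List.
Set Implicit Arguments.
Unset Strict Implicit.

Definition finite {T : Type} (X : T -> Prop) : Prop :=
  exists l : list T, forall x, X x <-> In x l.

Definition subset {T : Type} (X Y : T -> Prop) : Prop := forall x, X x -> Y x.

Definition rel (T : Type) := T -> T -> Prop.

Definition subrel {T : Type} (r r' : rel T) : Prop := forall a b, r a b -> r' a b.

Definition dom {T : Type} (r : rel T) : T -> Prop := fun a => exists b, r a b.
Definition cod {T : Type} (r : rel T) : T -> Prop := fun b => exists a, r a b.

(** [r] is (the graph of) a bijection [dom r ≅ cod r] *)
Definition is_bij {T : Type} (r : rel T) : Prop :=
  (forall a b b', r a b -> r a b' -> b = b') /\
  (forall a a' b, r a b -> r a' b -> a = a').

Definition image {T U : Type} (f : T -> U) (X : T -> Prop) : U -> Prop :=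
  fun b => exists a, X a /\ f a = b.

Definition img_rel {T U : Type} (f : T -> U) (r : rel T) : rel U :=
  fun b b' => exists a a', r a a' /\ f a = b /\ f a' = b'.

Definition ext {T : Type} (r : rel T) (a b : T) : rel T :=
  fun x y => r x y \/ (x = a /\ y = b).

(* polarity: [true] = positive (+), [false] = negative (-) *)
Record esp : Type := {
  ev : Type;
  leq : ev -> ev -> Prop;
  con : (ev -> Prop) -> Prop;
  pol : ev -> bool }.

Arguments leq {e} _ _.
Arguments con {e} _.
Arguments pol {e} _.

Record is_es (E : esp) : Prop := {
  es_refl : forall e : ev E, leq e e;
  es_antisym : forall e e' : ev E, leq e e' -> leq e' e -> e = e';
  es_trans : forall e e' e'' : ev E, leq e e' -> leq e' e'' -> leq e e'';
  es_fin_causes : forall e : ev E, finite (fun e' => leq e' e);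
  es_con_fin : forall X : ev E -> Prop, con X -> finite X;
  es_con_single : forall e : ev E, con (fun e' => e' = e);
  es_con_sub : forall X Y : ev E -> Prop, con Y -> subset X Y -> con X;
  es_con_down : forall (X : ev E -> Prop) (e e' : ev E),
      con X -> X e' -> leq e e' -> con (fun x => X x \/ x = e) }.

Definition config (E : esp) (x : ev E -> Prop) : Prop :=
  finite x /\ (forall e e' : ev E, x e' -> leq e e' -> x e) /\ con x.

Definition lt (E : esp) (e e' : ev E) : Prop := leq e e' /\ e <> e'.

Definition imm (E : esp) (e e' : ev E) : Prop :=
  lt e e' /\ ~ (exists e'', lt e e'' /\ lt e'' e').

Record is_isofam (E : esp) (S : rel (ev E) -> Prop) : Prop := {
  iso_wf : forall th, S th ->
      config (dom th) /\ config (cod th) /\ is_bij th /\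
      (forall a b, th a b -> pol a = pol b);
  iso_id : forall x, config x -> S (fun a b => x a /\ a = b);
  iso_inv : forall th, S th -> S (fun a b => th b a);
  iso_comp : forall th th', S th -> S th' -> (forall b, cod th b <-> dom th' b) ->
      S (fun a c => exists b, th a b /\ th' b c);
  iso_restr : forall th x, S th -> config x -> subset x (dom th) ->
      S (fun a b => th a b /\ x a);
  iso_ext : forall th x, S th -> config x -> subset (dom th) x ->
      exists th', S th' /\ subrel th th' /\ (forall a, dom th' a <-> x a) }.

Record essp : Type := {
  es :> esp;
  sym : rel (ev es) -> Prop }.

Arguments sym : clear implicits.

Definition is_essp (A : essp) : Prop := is_es A /\ is_isofam (sym A).

Definition es_map (A B : esp) (f : ev A -> ev B) : Prop :=
  (forall x, config x -> config (image f x)) /\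
  (forall x, config x -> forall a a', x a -> x a' -> f a = f a' -> a = a').

Definition essp_map (A B : essp) (f : ev A -> ev B) : Prop :=
  is_essp A /\ is_essp B /\ es_map f /\
  (forall a, pol (f a) = pol a) /\
  (forall th, sym A th -> sym B (img_rel f th)).

Definition courteous (S A : essp) (s : ev S -> ev A) : Prop :=
  forall s1 s2 : ev S, imm s1 s2 -> (pol s1 = true \/ pol s2 = false) ->
    imm (s s1) (s s2).

Definition strong_receptive (S A : essp) (s : ev S -> ev A) : Prop :=
  forall th, sym S th ->
  forall a1 a2 : ev A, pol a1 = false -> pol a2 = false ->
    ~ dom (img_rel s th) a1 ->
    sym A (ext (img_rel s th) a1 a2) ->
    exists! p : ev S * ev S,
      sym S (ext th (fst p) (snd p)) /\ s (fst p) = a1 /\ s (snd p) = a2.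

Definition pos_ext (E : esp) (th th1 : rel (ev E)) : Prop :=
  subrel th th1 /\ (forall a b, th1 a b -> ~ th a b -> pol a = true).

Definition thin (S : essp) : Prop :=
  forall th th1 th2, sym S th -> sym S th1 -> sym S th2 ->
    pos_ext th th1 -> pos_ext th th2 ->
    (exists z, config z /\ subset (dom th1) z /\ subset (dom th2) z) ->
    sym S (fun a b => th1 a b \/ th2 a b).

Definition sim_strategy (S A : essp) (s : ev S -> ev A) : Prop :=
  essp_map s /\ courteous s /\ strong_receptive s /\ thin S.

(** [th] is the prime element [p]_th of the isomorphism family *)
Definition prime_at (A : essp) (th : rel (ev A)) (p : ev A * ev A) : Prop :=
  sym A th /\ th (fst p) (snd p) /\
  (forall th', sym A th' -> subrel th' th -> th' (fst p) (snd p) -> th' = th).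

(** events of ~A : the complete primes of S_A, given with their top pair *)
Definition tev (A : essp) : Type :=
  { q : rel (ev A) * (ev A * ev A) | prime_at (fst q) (snd q) }.

Definition trel {A : essp} (e : tev A) : rel (ev A) := fst (proj1_sig e).
Definition ttop {A : essp} (e : tev A) : ev A * ev A := snd (proj1_sig e).

Definition tilde_esp (A : essp) : esp := {|
  ev := tev A;
  leq := fun e e' => subrel (trel e) (trel e');
  con := fun X => finite X /\
           exists th, sym A th /\ forall e, X e -> subrel (trel e) th;
  pol := fun e => pol (fst (ttop e)) |}.

(** the bijection in S_A corresponding to a configuration of ~A *)
Definition tunion {A : essp} (X : tev A -> Prop) : rel (ev A) :=
  fun a b => exists e, X e /\ ttop e = (a, b).

(** canonical higher symmetry: bijections between th, th' in S_A arising from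
    commuting squares  phi2 o th = th' o phi1  with phi1, phi2 in S_A *)
Definition higher_sym (A : essp) (Phi : rel (tev A)) : Prop :=
  config (E := tilde_esp A) (dom Phi) /\ config (E := tilde_esp A) (cod Phi) /\
  is_bij Phi /\
  exists phi1 phi2, sym A phi1 /\ sym A phi2 /\
    (forall a, dom phi1 a <-> dom (tunion (dom Phi)) a) /\
    (forall a, cod phi1 a <-> dom (tunion (cod Phi)) a) /\
    (forall b, dom phi2 b <-> cod (tunion (dom Phi)) b) /\
    (forall b, cod phi2 b <-> cod (tunion (cod Phi)) b) /\
    (forall e e', Phi e e' ->
       phi1 (fst (ttop e)) (fst (ttop e')) /\ phi2 (snd (ttop e)) (snd (ttop e'))).

Definition tilde (A : essp) : essp := {|
  es := tilde_esp A;
  sym := @higher_sym A |}.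

Definition prime_closure (A : essp) (psi : rel (ev A)) (q : ev A * ev A) : rel (ev A) :=
  fun a b => forall th', sym A th' -> subrel th' psi -> th' (fst q) (snd q) -> th' a b.

(** specification of ~sigma on events: the prime [p]_th is sent to the prime
    [sigma p]_(sigma th); on configurations this is th |-> sigma th *)
Definition tilde_map_spec (S A : essp) (s : ev S -> ev A)
    (t : tev S -> tev A) : Prop :=
  forall e : tev S,
    ttop (t e) = (s (fst (ttop e)), s (snd (ttop e))) /\
    trel (t e) = @prime_closure A (img_rel s (trel e)) (s (fst (ttop e)), s (snd (ttop e))).

(* Main.v *)
Require Import Defs.
From Stdlib Require Import List Classical ClassicalEpsilon FunctionalExtensionality PropExtensionality ProofIrrelevance.
Set Implicit Arguments.
Unset Strict Implicit.

Lemma set_ext {T} (P Q : T -> Prop) : (forall x, P x <-> Q x) -> P = Q.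
Proof. intro H; apply functional_extensionality; intro x; apply propositional_extensionality; auto. Qed.

Lemma rel_ext {T} (r r' : rel T) : (forall a b, r a b <-> r' a b) -> r = r'.
Proof. intro H; apply functional_extensionality; intro x; apply set_ext; auto. Qed.

Lemma finite_sub {T} (X Y : T -> Prop) : finite Y -> subset X Y -> finite X.
Proof.
  intros [l Hl] Hs.
  exists (filter (fun x => if excluded_middle_informative (X x) then true else false) l).
  intro x; rewrite filter_In; split.
  - intro Hx; split; [apply Hl, Hs, Hx|]. destruct (excluded_middle_informative (X x)); tauto.
  - intros [_ H]; destruct (excluded_middle_informative (X x)); [auto|discriminate].
Qed.

Lemma finite_union {T} (X Y : T -> Prop) : finite X -> finite Y -> finite (fun x => X x \/ Y x).
Proof.
  intros [l Hl] [m Hm]; exists (l ++ m); intro x; rewrite in_app_iff, Hl, Hm; tauto.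
Qed.

Lemma finite_single {T} (a : T) : finite (fun x => x = a).
Proof. exists (a :: nil); intro x; simpl; split; [intro; left; auto| intros [H|[]]; auto]. Qed.

Lemma finite_image {T U} (f : T -> U) (X : T -> Prop) : finite X -> finite (image f X).
Proof.
  intros [l Hl]; exists (map f l); intro y; rewrite in_map_iff; unfold image; split.
  - intros [a [Ha Hb]]; exists a; split; auto; apply Hl; auto.
  - intros [a [Ha Hb]]; exists a; split; auto; apply Hl; auto.
Qed.

Lemma finite_inj {T U} (X : T -> Prop) (Y : U -> Prop) (f : U -> T) :
  finite X -> (forall u, Y u -> X (f u)) ->
  (forall u u', Y u -> Y u' -> f u = f u' -> u = u') -> finite Y.
Proof.
  intros [l Hl] H1 H2.
  set (g := fun t => match excluded_middle_informative (exists u, Y u /\ f u = t) with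
                     | left H => Some (proj1_sig (constructive_indefinite_description _ H))
                     | right _ => None end).
  exists (flat_map (fun t => match g t with Some u => u :: nil | None => nil end) l).
  intro u; rewrite in_flat_map; split.
  - intro Hu. exists (f u); split; [apply Hl, H1, Hu|].
    unfold g; destruct (excluded_middle_informative _) as [H|H].
    + destruct (constructive_indefinite_description _ H) as [v [Hv Hfv]]; simpl.
      left; apply H2; auto.
    + exfalso; apply H; eauto.
  - intros [t [_ Ht]]. unfold g in Ht; destruct (excluded_middle_informative _) as [H|H].
    + destruct (constructive_indefinite_description _ H) as [v [Hv Hfv]]; simpl in Ht.
      destruct Ht as [Ht|[]]; subst; auto.
    + destruct Ht.
Qed.

Definition restr (E : esp) (th : rel (ev E)) (a : ev E) : rel (ev E) :=
  fun x y => th x y /\ leq x a.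
Definition primes (A : essp) (th : rel (ev A)) : tev A -> Prop :=
  fun e => subrel (trel e) th.
Definition comp {T} (r r' : rel T) : rel T := fun a c => exists b, r a b /\ r' b c.
Definition inv {T} (r : rel T) : rel T := fun a b => r b a.

Section Basic.
Variable A : essp.
Hypothesis HA : is_essp A.

Lemma HE : is_es A. Proof. exact (proj1 HA). Qed.
Lemma HI : is_isofam (sym A). Proof. exact (proj2 HA). Qed.

Lemma sym_wf th : sym A th ->
  config (dom th) /\ config (cod th) /\ is_bij th /\ (forall a b, th a b -> pol a = pol b).
Proof. apply (iso_wf HI). Qed.

Lemma sym_dom th : sym A th -> config (dom th). Proof. intro H; apply (sym_wf H). Qed.
Lemma sym_cod th : sym A th -> config (cod th). Proof. intro H; apply (sym_wf H). Qed.
Lemma sym_fun th a b b' : sym A th -> th a b -> th a b' -> b = b'.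
Proof. intros H; apply (sym_wf H). Qed.
Lemma sym_inj th a a' b : sym A th -> th a b -> th a' b -> a = a'.
Proof. intros H; apply (sym_wf H). Qed.
Lemma sym_pol th a b : sym A th -> th a b -> pol a = pol b.
Proof. intros H; apply (sym_wf H). Qed.
Lemma sym_inv th : sym A th -> sym A (inv th).
Proof. apply (iso_inv HI). Qed.

Lemma config_down (x : ev A -> Prop) a a' : config x -> x a -> leq a' a -> x a'.
Proof. intros [_ [H _]] Ha Hl; eauto. Qed.

Lemma config_causes (x : ev A -> Prop) a : config x -> x a -> config (fun y => leq y a).
Proof.
  intros Hx Ha; split; [apply (es_fin_causes HE)|split].
  - intros e e' H1 H2; eapply (es_trans HE); eauto.
  - eapply (es_con_sub HE); [apply Hx|]. intros y Hy; eapply config_down; eauto.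
Qed.

Lemma config_sub (x y : ev A -> Prop) : config y -> subset x y ->
  (forall e e', x e' -> leq e e' -> x e) -> config x.
Proof.
  intros [Hf [Hd Hc]] Hs Hdx; split; [eapply finite_sub; eauto|split; auto].
  eapply (es_con_sub HE); eauto.
Qed.

Lemma restr_sym th a b : sym A th -> th a b -> sym A (restr th a).
Proof.
  intros Hth Hab. apply (iso_restr HI); auto.
  - eapply config_causes; [apply (sym_dom Hth)|exists b; auto].
  - intros y Hy; eapply config_down; [apply (sym_dom Hth)| exists b; eauto | auto].
Qed.

Lemma sym_order th a b a' b' : sym A th -> th a b -> th a' b' -> leq a' a -> leq b' b.
Proof.
  intros Hth Hab Ha'b' Hl.
  assert (Hi := sym_inv Hth).
  assert (Hr : sym A (restr (inv th) b)) by (apply restr_sym with a; auto).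
  assert (Hc := sym_cod Hr).
  assert (Hx : cod (restr (inv th) b) a').
  { eapply config_down; eauto. exists b; split; [exact Hab|apply (es_refl HE)]. }
  destruct Hx as [y [Hy1 Hy2]]. unfold inv in Hy1.
  rewrite (sym_fun Hth Ha'b' Hy1); auto.
Qed.

Lemma sym_order_rev th a b a' b' : sym A th -> th a b -> th a' b' -> leq b' b -> leq a' a.
Proof.
  intros Hth Hab Ha'b' Hl. apply (@sym_order (inv th) b a b' a'); auto. apply sym_inv; auto.
Qed.

Lemma prime_restr th a b : sym A th -> th a b -> prime_at (restr th a) (a, b).
Proof.
  intros Hth Hab; split; [eapply restr_sym; eauto|split].
  - split; simpl; auto; apply (es_refl HE).
  - simpl; intros th' Hth' Hsub Hth'ab. apply rel_ext; intros x y; split; [apply Hsub|].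
    intros [Hxy Hxa].
    assert (Hx : dom th' x) by (eapply config_down; [apply (sym_dom Hth')|exists b; eauto|auto]).
    destruct Hx as [y' Hy']. destruct (Hsub _ _ Hy') as [Hy'' _].
    rewrite (sym_fun Hth Hxy Hy''); auto.
Qed.

Lemma prime_sub r a b th : prime_at r (a, b) -> sym A th -> subrel r th -> r = restr th a.
Proof.
  intros [Hr [Hab Hmin]] Hth Hs; simpl in *.
  assert (Hra : restr r a = r).
  { apply Hmin; [eapply restr_sym; eauto| intros x y [H _]; auto| split; auto; apply (es_refl HE)]. }
  apply rel_ext; intros x y; split.
  - intro Hxy. rewrite <- Hra in Hxy. destruct Hxy; split; auto.
  - intros [Hxy Hxa].
    assert (Hx : dom r x) by (eapply config_down; [apply (sym_dom Hr)|exists b; eauto|auto]).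
    destruct Hx as [y' Hy']. rewrite (sym_fun Hth Hxy (Hs _ _ Hy')); auto.
Qed.

Lemma tev_prime (e : tev A) : prime_at (trel e) (ttop e).
Proof. exact (proj2_sig e). Qed.
Lemma tev_sym (e : tev A) : sym A (trel e).
Proof. apply (tev_prime e). Qed.
Lemma tev_top (e : tev A) : trel e (fst (ttop e)) (snd (ttop e)).
Proof. apply (tev_prime e). Qed.

Lemma tev_restr (e : tev A) th : sym A th -> subrel (trel e) th -> trel e = restr th (fst (ttop e)).
Proof.
  intros Hth Hs. assert (H := tev_prime e). destruct (ttop e) as [a b] eqn:E.
  simpl. eapply prime_sub; eauto.
Qed.

Lemma tev_eq (e e' : tev A) : trel e = trel e' -> ttop e = ttop e' -> e = e'.
Proof.
  destruct e as [[r p] H], e' as [[r' p'] H']; unfold trel, ttop; simpl; intros; subst.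
  f_equal; apply proof_irrelevance.
Qed.

Lemma tev_uniq th (e e' : tev A) : sym A th -> subrel (trel e) th -> subrel (trel e') th ->
  fst (ttop e) = fst (ttop e') -> e = e'.
Proof.
  intros Hth H1 H2 Hf. apply tev_eq.
  - rewrite (tev_restr Hth H1), (tev_restr Hth H2), Hf; auto.
  - assert (T1 := H1 _ _ (tev_top e)); assert (T2 := H2 _ _ (tev_top e')).
    destruct (ttop e) as [a b], (ttop e') as [a' b']; simpl in *; subst; f_equal; eapply sym_fun; eauto.
Qed.

Lemma ex_prime th a b : sym A th -> th a b -> exists e : tev A, trel e = restr th a /\ ttop e = (a, b).
Proof.
  intros Hth Hab. exists (exist _ (restr th a, (a, b)) (prime_restr Hth Hab)); split; reflexivity.
Qed.

Lemma tev_le_fst (e e' : tev A) : subrel (trel e) (trel e') -> leq (fst (ttop e)) (fst (ttop e')).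
Proof.
  intro Hs. assert (H := Hs _ _ (tev_top e)).
  rewrite (tev_restr (tev_sym e') (fun x y h => h)) in H. apply H.
Qed.

Lemma tev_le_of th (e e' : tev A) : sym A th -> subrel (trel e) th -> subrel (trel e') th ->
  leq (fst (ttop e)) (fst (ttop e')) -> subrel (trel e) (trel e').
Proof.
  intros Hth H1 H2 Hl. rewrite (tev_restr Hth H1), (tev_restr Hth H2).
  intros x y [Hxy Hx]; split; auto. eapply (es_trans HE); eauto.
Qed.

Lemma tev_lt (e e' : tev A) : lt (E := tilde_esp A) e e' -> lt (fst (ttop e)) (fst (ttop e')).
Proof.
  intros [Hle Hne]; simpl in Hle; split; [apply tev_le_fst; auto|].
  intro Heq; apply Hne. eapply tev_uniq; [apply (tev_sym e')|exact Hle|intros x y h; exact h|auto].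
Qed.

End Basic.

Definition TC (A : essp) (X : tev A -> Prop) := config (E := tilde_esp A) X.

Section TConf.
Variable A : essp.
Hypothesis HA : is_essp A.

Lemma TC_unfold (X : tev A -> Prop) : TC X <->
  finite X /\ (forall e e', X e' -> subrel (trel e) (trel e') -> X e) /\
  (exists th, sym A th /\ forall e, X e -> subrel (trel e) th).
Proof.
  unfold TC, config; simpl; split.
  - intros [H1 [H2 [_ H3]]]; auto.
  - intros [H1 [H2 H3]]; auto.
Qed.

Lemma tunion_sub (X : tev A -> Prop) (e : tev A) : TC X -> X e -> subrel (trel e) (tunion X).
Proof.
  intros HX He x y Hxy. apply TC_unfold in HX; destruct HX as [_ [Hd _]].
  destruct (ex_prime HA (tev_sym e) Hxy) as [e'' [H1 H2]].
  exists e''; split; auto. apply Hd with e; auto.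
  rewrite H1; intros u v [Huv _]; auto.
Qed.

Lemma dom_tunion (X : tev A -> Prop) a : dom (tunion X) a <-> exists e, X e /\ fst (ttop e) = a.
Proof.
  unfold dom, tunion; split.
  - intros [b [e [He Ht]]]; exists e; rewrite Ht; auto.
  - intros [e [He Ht]]; exists (snd (ttop e)), e; split; auto; rewrite <- Ht; destruct (ttop e); auto.
Qed.

Lemma cod_tunion (X : tev A -> Prop) b : cod (tunion X) b <-> exists e, X e /\ snd (ttop e) = b.
Proof.
  unfold cod, tunion; split.
  - intros [a [e [He Ht]]]; exists e; rewrite Ht; auto.
  - intros [e [He Ht]]; exists (fst (ttop e)), e; split; auto; rewrite <- Ht; destruct (ttop e); auto.
Qed.

Lemma tunion_top (X : tev A -> Prop) (e : tev A) : X e -> tunion X (fst (ttop e)) (snd (ttop e)).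
Proof. intro He; exists e; split; auto; destruct (ttop e); auto. Qed.

Lemma tunion_sym (X : tev A -> Prop) : TC X -> sym A (tunion X).
Proof.
  intro HX. assert (HX' := HX). apply TC_unfold in HX'; destruct HX' as [Hf [Hd [w [Hw Hsw]]]].
  assert (Hsub : subrel (tunion X) w).
  { intros a b [e [He Ht]]. assert (T := Hsw _ He _ _ (tev_top e)). rewrite Ht in T; auto. }
  assert (Hx : config (dom (tunion X))).
  { apply (config_sub HA (y := dom w)); [apply sym_dom; auto| |].
    - intros a [b Hab]; exists b; auto.
    - intros a0 a Ha Hl. apply dom_tunion in Ha; destruct Ha as [e [He Hea]]. subst a.
      assert (Hda : dom (trel e) a0) by
        (apply (config_down (x:=dom (trel e))) with (fst (ttop e));
         [apply sym_dom; auto; apply tev_sym| exists (snd (ttop e)); apply tev_top| auto]).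
      destruct Hda as [b' Hb']. exists b'. apply (tunion_sub HX He); auto. }
  assert (Hr := iso_restr (HI HA) Hw Hx).
  assert (Heq : (fun a b => w a b /\ dom (tunion X) a) = tunion X).
  { apply rel_ext; intros a b; split.
    - intros [Hab [b' Hab']]. rewrite (sym_fun HA Hw Hab (Hsub _ _ Hab')); auto.
    - intro H; split; auto. exists b; auto. }
  rewrite <- Heq; apply Hr. intros a [b Hab]; exists b; auto.
Qed.

Lemma tconfig_mem (X : tev A -> Prop) (e : tev A) : TC X -> (X e <-> subrel (trel e) (tunion X)).
Proof.
  intro HX; split; [apply tunion_sub; auto|].
  intro Hs. destruct (Hs _ _ (tev_top e)) as [e0 [He0 Ht]].
  replace e with e0; auto. apply (tev_uniq HA (tunion_sym HX)); auto.
  - apply tunion_sub; auto.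
  - rewrite Ht; auto.
Qed.

Lemma primes_config (th : rel (ev A)) : sym A th -> TC (primes th).
Proof.
  intro Hth. apply TC_unfold; split; [|split].
  - apply finite_inj with (dom th) (fun e => fst (ttop e)).
    + apply (sym_dom HA Hth).
    + intros e He; exists (snd (ttop e)); apply He, tev_top.
    + intros u u' Hu Hu' Hf; eapply tev_uniq; eauto.
  - intros e e' He' Hs x y Hxy; auto.
  - exists th; split; auto.
Qed.

Lemma tunion_primes (th : rel (ev A)) : sym A th -> tunion (primes th) = th.
Proof.
  intro Hth; apply rel_ext; intros a b; split.
  - intros [e [He Ht]]. assert (T := He _ _ (tev_top e)); rewrite Ht in T; auto.
  - intro Hab. destruct (ex_prime HA Hth Hab) as [e [H1 H2]]. exists e; split; auto.
    unfold primes; rewrite H1; intros x y [h _]; auto.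
Qed.

Lemma primes_tunion (X : tev A -> Prop) : TC X -> primes (tunion X) = X.
Proof. intro HX; apply set_ext; intro e; symmetry; apply tconfig_mem; auto. Qed.

Lemma TC_ext (X Y : tev A -> Prop) : TC X -> (forall e, X e <-> Y e) -> TC Y.
Proof. intros H He; rewrite <- (set_ext He); auto. Qed.

Lemma tilde_is_es : is_es (tilde_esp A).
Proof.
  split; simpl.
  - intros e x y h; auto.
  - intros e e' H1 H2. eapply (tev_uniq HA (tev_sym e)); [intros x y h; exact h|auto|].
    apply (es_antisym (HE HA)); apply tev_le_fst; auto.
  - intros e e' e'' H1 H2 x y h; auto.
  - intro e. assert (H := primes_config (tev_sym e)). apply TC_unfold in H; apply H.
  - intros X [H _]; auto.
  - intro e; split; [apply finite_single|]. exists (trel e); split; [apply tev_sym|].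
    intros e' ->; intros x y h; auto.
  - intros X Y [Hf [w [Hw Hs]]] Hxy; split; [eapply finite_sub; eauto|exists w; split; auto].
  - intros X e e' [Hf [w [Hw Hs]]] He' Hl; split; [apply finite_union; auto; apply finite_single|].
    exists w; split; auto. intros x [Hx| ->]; auto. intros u v h; apply (Hs _ He'); auto.
Qed.

End TConf.

Definition hs_wit (A : essp) (Phi : rel (tev A)) (phi1 phi2 : rel (ev A)) : Prop :=
  sym A phi1 /\ sym A phi2 /\
    (forall a, dom phi1 a <-> dom (tunion (dom Phi)) a) /\
    (forall a, cod phi1 a <-> dom (tunion (cod Phi)) a) /\
    (forall b, dom phi2 b <-> cod (tunion (dom Phi)) b) /\
    (forall b, cod phi2 b <-> cod (tunion (cod Phi)) b) /\
    (forall e e', Phi e e' ->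
       phi1 (fst (ttop e)) (fst (ttop e')) /\ phi2 (snd (ttop e)) (snd (ttop e'))).

Lemma hs_iff (A : essp) (Phi : rel (tev A)) : higher_sym Phi <->
  TC (dom Phi) /\ TC (cod Phi) /\ is_bij Phi /\ exists phi1 phi2, hs_wit Phi phi1 phi2.
Proof. reflexivity. Qed.

Section HS.
Variable A : essp.
Hypothesis HA : is_essp A.

Lemma hs_cod_char (Phi : rel (tev A)) phi1 phi2 : hs_wit Phi phi1 phi2 ->
  forall a' b', tunion (cod Phi) a' b' <-> exists a b, phi1 a a' /\ tunion (dom Phi) a b /\ phi2 b b'.
Proof.
  intros [Hp1 [Hp2 [_ [_ [_ [_ Hw]]]]]] a' b'; split.
  - intros [f [[e Hef] Ht]]. destruct (Hw _ _ Hef) as [W1 W2]. rewrite Ht in W1, W2.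
    exists (fst (ttop e)), (snd (ttop e)); split; auto; split; auto.
    apply tunion_top; exists f; auto.
  - intros [a [b [H1 [[e [[f Hef] Ht]] H2]]]]. destruct (Hw _ _ Hef) as [W1 W2]. rewrite Ht in W1, W2.
    simpl in W1, W2. exists f; split; [exists e; auto|].
    rewrite (sym_fun HA Hp1 H1 W1), (sym_fun HA Hp2 H2 W2). destruct (ttop f); auto.
Qed.

Lemma hs_order (Phi : rel (tev A)) e f e' f' : higher_sym Phi -> Phi e f -> Phi e' f' ->
  subrel (trel e') (trel e) -> subrel (trel f') (trel f).
Proof.
  intros H Hef Hef' Hl. apply hs_iff in H.
  destruct H as [Hd [Hc [Hb [phi1 [phi2 Hw]]]]].
  assert (Hw' := Hw). destruct Hw' as [Hp1 [_ [_ [_ [_ [_ W]]]]]].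
  apply (tev_le_of HA (th := tunion (cod Phi))).
  - apply tunion_sym; auto.
  - apply tunion_sub; auto. exists e'; auto.
  - apply tunion_sub; auto. exists e; auto.
  - apply (sym_order HA Hp1 (proj1 (W _ _ Hef)) (proj1 (W _ _ Hef'))).
    apply tev_le_fst; auto.
Qed.

Lemma hs_inv (Phi : rel (tev A)) : higher_sym Phi -> higher_sym (inv Phi).
Proof.
  intro H. apply hs_iff in H; destruct H as [Hd [Hc [[Hb1 Hb2] [phi1 [phi2 Hw]]]]].
  destruct Hw as [Hp1 [Hp2 [H1 [H2 [H3 [H4 W]]]]]].
  apply hs_iff; split; [exact Hc|split; [exact Hd|split]].
  - split; intros; eauto.
  - exists (inv phi1), (inv phi2); split; [apply sym_inv; auto|split; [apply sym_inv; auto|]].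
    split; [exact H2|split; [exact H1|split; [exact H4|split; [exact H3|]]]].
    intros e e' He; apply W; auto.
Qed.

Lemma hs_wf (Phi : rel (tev A)) : higher_sym Phi -> 
      config (E := tilde_esp A) (dom Phi) /\ config (E := tilde_esp A) (cod Phi) /\ is_bij Phi /\
      (forall a b, Phi a b -> pol (e := tilde_esp A) a = pol (e := tilde_esp A) b).
Proof.
    intros H. assert (H' := H). apply hs_iff in H'.
    destruct H' as [Hd [Hc [Hb [phi1 [phi2 Hw]]]]]; split; auto; split; auto; split; auto.
    intros e e' He; simpl. destruct Hw as [Hp1 [_ [_ [_ [_ [_ W]]]]]].
    eapply (sym_pol HA Hp1); apply (W _ _ He).
Qed.

Lemma hs_id (X : tev A -> Prop) : TC X -> higher_sym (fun a b => X a /\ a = b).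
Proof.
    intros HX.
    assert (Hdx : dom (fun (a b : tev A) => X a /\ a = b) = X) by (apply set_ext; intro e; split; [intros [b [h _]]; auto|intro h; exists e; auto]).
    assert (Hcx : cod (fun (a b : tev A) => X a /\ a = b) = X) by (apply set_ext; intro e; split; [intros [b [h ->]]; auto|intro h; exists e; auto]).
    change (higher_sym (fun (a b : tev A) => X a /\ a = b)). apply hs_iff; unfold hs_wit; rewrite Hdx, Hcx; split; auto; split; auto; split.
    + split; intros; intuition congruence.
    + assert (Ht := tunion_sym HA HX).
      exists (fun a b => dom (tunion X) a /\ a = b), (fun a b => cod (tunion X) a /\ a = b).
      split; [apply (iso_id (HI HA)); apply (sym_dom HA Ht)|].
      split; [apply (iso_id (HI HA)); apply (sym_cod HA Ht)|].
      split; [intro a; split; [intros [b [h _]]; auto|intro h; exists a; auto]|].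
      split; [intro a; split; [intros [b [h ->]]; auto|intro h; exists a; auto]|].
      split; [intro a; split; [intros [b [h _]]; auto|intro h; exists a; auto]|].
      split; [intro a; split; [intros [b [h ->]]; auto|intro h; exists a; auto]|].
      intros e e' [He <-]; split; split; auto.
      * apply dom_tunion; eauto.
      * apply cod_tunion; eauto.
Qed.

Lemma hs_comp (Phi Phi' : rel (tev A)) : higher_sym Phi -> higher_sym Phi' ->
  (forall b, cod Phi b <-> dom Phi' b) -> higher_sym (comp Phi Phi').
Proof.
    intros H H' Hcd.
    apply hs_iff in H; destruct H as [Hd [Hc [[Hb1 Hb2] [phi1 [phi2 Hw]]]]].
    apply hs_iff in H'; destruct H' as [Hd' [Hc' [[Hb1' Hb2'] [phi1' [phi2' Hw']]]]].
    assert (Ecd : cod Phi = dom Phi') by (apply set_ext; auto).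
    assert (Ed : dom (comp Phi Phi') = dom Phi).
    { apply set_ext; intro e; split.
      - intros [g [f [Hf _]]]; exists f; auto.
      - intros [f Hf]. assert (Hf' : dom Phi' f) by (rewrite <- Ecd; exists e; auto).
        destruct Hf' as [g Hg]; exists g, f; auto. }
    assert (Ec : cod (comp Phi Phi') = cod Phi').
    { apply set_ext; intro g; split.
      - intros [e [f [_ Hf]]]; exists f; auto.
      - intros [f Hf]. assert (Hf' : cod Phi f) by (rewrite Ecd; exists g; auto).
        destruct Hf' as [e He]; exists e, f; auto. }
    apply hs_iff. unfold hs_wit. rewrite Ed, Ec. split; auto; split; auto; split.
    + split.
      * intros e g g' [f [H1 H2]] [f' [H1' H2']]. rewrite <- (Hb1 _ _ _ H1 H1') in H2'. eauto.
      * intros e e' g [f [H1 H2]] [f' [H1' H2']]. rewrite <- (Hb2' _ _ _ H2 H2') in H1'. eauto.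
    + destruct Hw as [Hp1 [Hp2 [H1 [H2 [H3 [H4 W]]]]]].
      destruct Hw' as [Hp1' [Hp2' [H1' [H2' [H3' [H4' W']]]]]].
      rewrite Ecd in H2, H4.
      exists (comp phi1 phi1'), (comp phi2 phi2').
      split; [apply (iso_comp (HI HA) Hp1 Hp1'); intro b; split; intro h; [apply H1', H2, h|apply H2, H1', h]|].
      split; [apply (iso_comp (HI HA) Hp2 Hp2'); intro b; split; intro h; [apply H3', H4, h|apply H4, H3', h]|].
      split; [|split; [|split; [|split]]].
      * intro a; rewrite <- H1; split; [intros [c [b [Hab _]]]; exists b; auto|].
        intros [b Hab]. assert (Hb : dom phi1' b) by (apply H1', H2; exists a; auto).
        destruct Hb as [c Hc0]; exists c, b; auto.
      * intro c; rewrite <- H2'; split; [intros [a [b [_ Hbc]]]; exists b; auto|].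
        intros [b Hbc]. assert (Hb : cod phi1 b) by (apply H2, H1'; exists c; auto).
        destruct Hb as [a Ha]; exists a, b; auto.
      * intro a; rewrite <- H3; split; [intros [c [b [Hab _]]]; exists b; auto|].
        intros [b Hab]. assert (Hb : dom phi2' b) by (apply H3', H4; exists a; auto).
        destruct Hb as [c Hc0]; exists c, b; auto.
      * intro c; rewrite <- H4'; split; [intros [a [b [_ Hbc]]]; exists b; auto|].
        intros [b Hbc]. assert (Hb : cod phi2 b) by (apply H4, H3'; exists c; auto).
        destruct Hb as [a Ha]; exists a, b; auto.
      * intros e g [f [Hef Hfg]]. destruct (W _ _ Hef), (W' _ _ Hfg).
        split; [exists (fst (ttop f))|exists (snd (ttop f))]; auto.
Qed.

Lemma hs_restr (Phi : rel (tev A)) (X : tev A -> Prop) : higher_sym Phi -> TC X -> subset X (dom Phi) ->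
   higher_sym (fun a b => Phi a b /\ X a).
Proof.
    intros H HX Hsub.
    assert (Hinv := hs_inv H).
    apply hs_iff in H; destruct H as [Hd [Hc [[Hb1 Hb2] [phi1 [phi2 Hw]]]]].
    set (R := fun a b => Phi a b /\ X a).
    assert (Ed : dom R = X).
    { apply set_ext; intro e; split; [intros [f [_ h]]; auto|].
      intro h. destruct (Hsub _ h) as [f Hf]; exists f; split; auto. }
    assert (HcR : TC (cod R)).
    { apply TC_unfold in Hc. destruct Hc as [Hcf [Hcd [w [Hw0 Hws]]]].
      apply TC_unfold; split; [|split].
      - eapply finite_sub; eauto. intros f [e [h _]]; exists e; auto.
      - intros g f [e [Hef HXe]] Hl. assert (Hg : cod Phi g) by (apply Hcd with f; auto; exists e; auto).
        destruct Hg as [e' He']. exists e'; split; auto.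
        apply TC_unfold in HX; apply (proj1 (proj2 HX)) with e; auto.
        apply (hs_order Hinv (f := e) (e := f) (e' := g)); auto.
      - exists w; split; auto. intros f [e [h _]]; apply Hws; exists e; auto. }
    assert (Ht := tunion_sym HA HX).
    destruct Hw as [Hp1 [Hp2 [H1 [H2 [H3 [H4 W]]]]]].
    apply hs_iff. unfold hs_wit. change (fun a b => Phi a b /\ X a) with R. rewrite Ed.
    split; auto; split; auto; split.
    + split; [intros e f f' [h _] [h' _]; eauto| intros e e' f [h _] [h' _]; eauto].
    + exists (fun a b => phi1 a b /\ dom (tunion X) a), (fun a b => phi2 a b /\ cod (tunion X) a).
      split; [apply (iso_restr (HI HA)); auto; [apply (sym_dom HA Ht)|]|].
      { intros a Ha; apply H1. apply dom_tunion in Ha; destruct Ha as [e [He <-]].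
        apply dom_tunion; exists e; auto. }
      split; [apply (iso_restr (HI HA)); auto; [apply (sym_cod HA Ht)|]|].
      { intros a Ha; apply H3. apply cod_tunion in Ha; destruct Ha as [e [He <-]].
        apply cod_tunion; exists e; auto. }
      split; [|split; [|split; [|split]]].
      * intro a; split; [intros [b [_ h]]; auto|intro h].
        assert (h' := h). apply dom_tunion in h'; destruct h' as [e [He <-]].
        destruct (Hsub _ He) as [f Hf]. exists (fst (ttop f)); split; auto. apply (W _ _ Hf).
      * intro b; split.
        -- intros [a [Hab Ha]]. apply dom_tunion in Ha; destruct Ha as [e [He <-]].
           destruct (Hsub _ He) as [f Hf]. apply dom_tunion. exists f; split; [exists e; split; auto|].
           symmetry; apply (sym_fun HA Hp1 Hab (proj1 (W _ _ Hf))).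
        -- intro Hb. apply dom_tunion in Hb; destruct Hb as [f [[e [Hef He]] <-]].
           exists (fst (ttop e)); split; [apply (W _ _ Hef)|apply dom_tunion; eauto].
      * intro a; split; [intros [b [_ h]]; auto|intro h].
        assert (h' := h). apply cod_tunion in h'; destruct h' as [e [He <-]].
        destruct (Hsub _ He) as [f Hf]. exists (snd (ttop f)); split; auto. apply (W _ _ Hf).
      * intro b; split.
        -- intros [a [Hab Ha]]. apply cod_tunion in Ha; destruct Ha as [e [He <-]].
           destruct (Hsub _ He) as [f Hf]. apply cod_tunion. exists f; split; [exists e; split; auto|].
           symmetry; apply (sym_fun HA Hp2 Hab (proj2 (W _ _ Hf))).
        -- intro Hb. apply cod_tunion in Hb; destruct Hb as [f [[e [Hef He]] <-]].
           exists (snd (ttop e)); split; [apply (W _ _ Hef)|apply cod_tunion; eauto].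
      * intros e f [Hef HXe]; destruct (W _ _ Hef); split; split; auto;
        [apply dom_tunion|apply cod_tunion]; eauto.
Qed.


Lemma hs_ext (Phi : rel (tev A)) (X : tev A -> Prop) : higher_sym Phi -> TC X -> subset (dom Phi) X ->
  exists Phi', higher_sym Phi' /\ subrel Phi Phi' /\ (forall a, dom Phi' a <-> X a).
Proof.
  intros H HX Hsub.
  apply hs_iff in H; destruct H as [Hd [Hc [[Hb1 Hb2] [phi1 [phi2 Hw]]]]].
  assert (Hchar := hs_cod_char Hw).
  destruct Hw as [Hp1 [Hp2 [H1 [H2 [H3 [H4 W]]]]]].
  set (xi := tunion X).
  assert (Hxi : sym A xi) by (apply tunion_sym; auto).
  assert (Hthxi : subrel (tunion (dom Phi)) xi).
  { intros a b [e [He Ht]]; exists e; split; auto. }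
  destruct (iso_ext (HI HA) Hp1 (x := dom xi) (sym_dom HA Hxi)) as [phi1' [Hp1' [Hs1 Hd1]]].
  { intros a Ha. apply H1 in Ha. destruct Ha as [b Hab]. exists b; auto. }
  destruct (iso_ext (HI HA) Hp2 (x := cod xi) (sym_cod HA Hxi)) as [phi2' [Hp2' [Hs2 Hd2]]].
  { intros b Hb. apply H3 in Hb. destruct Hb as [a Hab]. exists a; auto. }
  assert (Hc2 : sym A (comp xi phi2')).
  { apply (iso_comp (HI HA) Hxi Hp2'). intro b; symmetry; apply Hd2. }
  assert (Hxi' : sym A (comp (inv phi1') (comp xi phi2'))).
  { apply (iso_comp (HI HA) (sym_inv HA Hp1') Hc2). intro a; split.
    - intro h. apply Hd1 in h. destruct h as [b Hab].
      assert (Hb : dom phi2' b) by (apply Hd2; exists a; auto). destruct Hb as [c Hc0].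
      exists c, b; auto.
    - intros [c [b [Hab _]]]. apply Hd1. exists b; auto. }
  set (xi' := comp (inv phi1') (comp xi phi2')) in *.
  assert (F1 : forall a' b', xi' a' b' <-> exists a b, phi1' a a' /\ xi a b /\ phi2' b b').
  { intros a' b'; unfold xi', comp, inv; split.
    - intros [a [Ha [b [Hb Hc0]]]]; eauto.
    - intros [a [b [Ha [Hb Hc0]]]]; eauto. }
  set (Phi' := fun e f => X e /\ primes xi' f /\ phi1' (fst (ttop e)) (fst (ttop f))).
  assert (F2 : forall e, X e -> exists f, Phi' e f).
  { intros e He. assert (Hxe := tunion_top He). fold xi in Hxe.
    assert (Ha : dom phi1' (fst (ttop e))) by (apply Hd1; eexists; eauto).
    assert (Hb : dom phi2' (snd (ttop e))) by (apply Hd2; eexists; eauto).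
    destruct Ha as [a' Ha], Hb as [b' Hb].
    assert (Hx : xi' a' b') by (apply F1; eauto).
    destruct (ex_prime HA Hxi' Hx) as [f [Hf1 Hf2]].
    exists f; split; auto; split.
    - unfold primes; rewrite Hf1; intros u v [h _]; auto.
    - rewrite Hf2; auto. }
  assert (EdP : dom Phi' = X).
  { apply set_ext; intro e; split; [intros [f [h _]]; auto|intro h; apply F2; auto]. }
  assert (EcP : cod Phi' = primes xi').
  { apply set_ext; intro f; split; [intros [e [_ [h _]]]; auto|intro h].
    assert (T := h _ _ (tev_top f)). apply F1 in T. destruct T as [a [b [Ha [Hab _]]]].
    assert (Hda : dom (tunion X) a) by (exists b; auto).
    apply dom_tunion in Hda. destruct Hda as [e [He <-]]. exists e; split; auto. }
  exists Phi'; split; [|split].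
  - apply hs_iff; unfold hs_wit; rewrite EdP, EcP. split; auto; split; [apply primes_config; auto|split].
    + split.
      * intros e f f' [_ [Hf Hef]] [_ [Hf' Hef']]. apply (tev_uniq HA Hxi' Hf Hf').
        apply (sym_fun HA Hp1' Hef Hef').
      * intros e e' f [He [_ Hef]] [He' [_ He'f]]. apply (tev_uniq HA Hxi); try apply tunion_sub; auto.
        apply (sym_inj HA Hp1' Hef He'f).
    + exists phi1', phi2'. rewrite (tunion_primes HA Hxi'). fold xi.
      split; auto; split; auto; split; [|split; [|split; [|split]]].
      * intro a; apply Hd1.
      * intro a'; split.
        -- intros [a Ha]. assert (Hda : dom xi a) by (apply Hd1; exists a'; auto).
           destruct Hda as [b Hab]. assert (Hb : dom phi2' b) by (apply Hd2; exists a; auto).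
           destruct Hb as [b' Hb']. exists b'. apply F1; eauto.
        -- intros [b' Hb']. apply F1 in Hb'. destruct Hb' as [a [b [Ha _]]]. exists a; auto.
      * intro b; apply Hd2.
      * intro b'; split.
        -- intros [b Hb]. assert (Hcb : cod xi b) by (apply Hd2; exists b'; auto).
           destruct Hcb as [a Hab]. assert (Ha : dom phi1' a) by (apply Hd1; exists b; auto).
           destruct Ha as [a' Ha']. exists a'. apply F1; eauto.
        -- intros [a' Hb']. apply F1 in Hb'. destruct Hb' as [a [b [_ [_ Hb]]]]. exists b; auto.
      * intros e f [He [Hf Hef]]; split; auto.
        assert (T := Hf _ _ (tev_top f)). apply F1 in T. destruct T as [a0 [b0 [Ha0 [Hab0 Hb0]]]].
        rewrite (sym_inj HA Hp1' Ha0 Hef) in Hab0.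
        rewrite (sym_fun HA Hxi (tunion_top He) Hab0); auto.
  - intros e f Hef. split; [apply Hsub; exists f; auto|split].
    + intros u v Huv.
      assert (T : tunion (cod Phi) u v) by (apply (tunion_sub HA (e := f) Hc); [exists e; auto|auto]).
      apply Hchar in T. destruct T as [a [b [Ha [Hab Hb]]]]. apply F1; exists a, b; auto.
    + apply Hs1, (W _ _ Hef).
  - intro e; rewrite EdP; tauto.
Qed.

Lemma higher_isofam : is_isofam (E := tilde_esp A) (@higher_sym A).
Proof.
  split.
  - apply hs_wf.
  - intros; apply hs_id; auto.
  - intros; apply hs_inv; auto.
  - intros; apply hs_comp; auto.
  - intros; apply hs_restr; auto.
  - intros; apply hs_ext; auto.
Qed.

Lemma tilde_essp : is_essp (tilde A).
Proof. split; [apply tilde_is_es; auto|apply higher_isofam]. Qed.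

End HS.

Lemma prime_closure_restr (A : essp) (HA : is_essp A) th a b : sym A th -> th a b ->
  prime_closure th (a, b) = restr th a.
Proof.
  intros Hth Hab; apply rel_ext; intros x y; split.
  - intro H. apply H; [apply (restr_sym HA Hth Hab)|intros u v [h _]; auto|split; auto; apply (es_refl (HE HA))].
  - intros [Hxy Hxa] th' Hth' Hs H'. simpl in H'.
    assert (Hx : dom th' x) by (eapply config_down; [apply (sym_dom HA Hth')|exists b; eauto|auto]).
    destruct Hx as [y' Hy']. rewrite (sym_fun HA Hth Hxy (Hs _ _ Hy')); auto.
Qed.

Lemma dom_img {T U} (f : T -> U) (r : rel T) : dom (img_rel f r) = image f (dom r).
Proof.
  apply set_ext; intro c; split.
  - intros [d [a [b [H [<- _]]]]]; exists a; split; auto; exists b; auto.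
  - intros [a [[b H] <-]]; exists (f b), a, b; auto.
Qed.

Lemma cod_img {T U} (f : T -> U) (r : rel T) : cod (img_rel f r) = image f (cod r).
Proof.
  apply set_ext; intro c; split.
  - intros [d [a [b [H [_ <-]]]]]; exists b; split; auto; exists a; auto.
  - intros [b [[a H] <-]]; exists (f a), a, b; auto.
Qed.

Section Map.
Variables S A : essp.
Variable s : ev S -> ev A.
Hypothesis HS : is_essp S.
Hypothesis HA : is_essp A.
Hypothesis Hmap : es_map s.
Hypothesis Hpol : forall a, pol (s a) = pol a.
Hypothesis Hsym : forall th, sym S th -> sym A (img_rel s th).

Lemma img_pair (th : rel (ev S)) a b : th a b -> img_rel s th (s a) (s b).
Proof. intro H; exists a, b; auto. Qed.

Lemma img_mono (th th' : rel (ev S)) : subrel th th' -> subrel (img_rel s th) (img_rel s th').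
Proof. intros H x y [a [b [Hab [<- <-]]]]; exists a, b; auto. Qed.

Lemma loc_inj (x : ev S -> Prop) a a' : config x -> x a -> x a' -> s a = s a' -> a = a'.
Proof. intros; eapply (proj2 Hmap); eauto. Qed.

Lemma img_fun (th : rel (ev S)) a b y : sym S th -> th a b -> img_rel s th (s a) y -> y = s b.
Proof.
  intros Hth Hab [a0 [b0 [H0 [E1 <-]]]].
  assert (a0 = a) by (apply (loc_inj (sym_dom HS Hth)); [exists b0|exists b|]; auto).
  subst; f_equal; eapply sym_fun; eauto.
Qed.

Lemma img_fun_inv (th : rel (ev S)) a b x : sym S th -> th a b -> img_rel s th x (s b) -> x = s a.
Proof.
  intros Hth Hab [a0 [b0 [H0 [<- E2]]]].
  assert (b0 = b) by (apply (loc_inj (sym_cod HS Hth)); [exists a0|exists a|]; auto).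
  subst; f_equal; eapply sym_inj; eauto.
Qed.

Lemma t_prime (e : tev S) : prime_at (restr (img_rel s (trel e)) (s (fst (ttop e))))
   (s (fst (ttop e)), s (snd (ttop e))).
Proof. apply (prime_restr HA (Hsym (tev_sym e))), img_pair, tev_top. Qed.

Definition tmap (e : tev S) : tev A :=
  exist _ (restr (img_rel s (trel e)) (s (fst (ttop e))), (s (fst (ttop e)), s (snd (ttop e)))) (t_prime e).

Lemma t_top e : ttop (tmap e) = (s (fst (ttop e)), s (snd (ttop e))).
Proof. reflexivity. Qed.
Lemma t_rel e : trel (tmap e) = restr (img_rel s (trel e)) (s (fst (ttop e))).
Proof. reflexivity. Qed.

Lemma t_spec : tilde_map_spec s tmap.
Proof.
  intro e; split; [reflexivity|]. rewrite t_rel. symmetry.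
  apply (prime_closure_restr HA (Hsym (tev_sym e))), img_pair, tev_top.
Qed.

Lemma t_sub (th : rel (ev S)) e : subrel (trel e) th -> subrel (trel (tmap e)) (img_rel s th).
Proof. intros H x y [Hxy _]; eapply img_mono; eauto. Qed.

Lemma image_t (X : tev S -> Prop) : TC X -> image tmap X = primes (img_rel s (tunion X)).
Proof.
  intro HX. assert (Ht := tunion_sym HS HX).
  apply set_ext; intro f; split.
  - intros [e [He <-]]. apply t_sub, tunion_sub; auto.
  - intro Hf. assert (T := Hf _ _ (tev_top f)).
    destruct T as [a [b [[e [He Hte]] [E1 E2]]]].
    exists e; split; auto. apply (tev_uniq HA (Hsym Ht)); auto.
    + apply t_sub, tunion_sub; auto.
    + rewrite t_top, Hte; auto.
Qed.

Lemma image_t_TC (X : tev S -> Prop) : TC X -> TC (image tmap X).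
Proof. intro HX; rewrite image_t; auto. apply primes_config; auto. apply Hsym, tunion_sym; auto. Qed.

Lemma tunion_image_t (X : tev S -> Prop) : TC X -> tunion (image tmap X) = img_rel s (tunion X).
Proof. intro HX; rewrite image_t; auto. apply tunion_primes; auto. apply Hsym, tunion_sym; auto. Qed.

Lemma t_loc_inj (X : tev S -> Prop) e e' : TC X -> X e -> X e' -> tmap e = tmap e' -> e = e'.
Proof.
  intros HX He He' Heq. assert (Ht := tunion_sym HS HX).
  assert (Hf : s (fst (ttop e)) = s (fst (ttop e'))).
  { assert (H := f_equal (fun z => fst (ttop z)) Heq). simpl in H. exact H. }
  apply (tev_uniq HS Ht); try apply tunion_sub; auto.
  apply (loc_inj (sym_dom HS Ht)); auto; apply dom_tunion; eauto.
Qed.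

Lemma t_hs (Phi : rel (tev S)) : higher_sym Phi -> higher_sym (img_rel tmap Phi).
Proof.
  intro H. apply hs_iff in H; destruct H as [Hd [Hc [[Hb1 Hb2] [phi1 [phi2 Hw]]]]].
  destruct Hw as [Hp1 [Hp2 [H1 [H2 [H3 [H4 W]]]]]].
  apply hs_iff; unfold hs_wit. rewrite dom_img, cod_img.
  split; [apply image_t_TC; auto|split; [apply image_t_TC; auto|split]].
  - split.
    + intros x y y' [e1 [f1 [H11 [<- <-]]]] [e2 [f2 [H22 [E1 <-]]]].
      assert (e2 = e1) by (apply (t_loc_inj Hd); [exists f2|exists f1|]; auto). subst. f_equal; eauto.
    + intros x x' y [e1 [f1 [H11 [<- <-]]]] [e2 [f2 [H22 [<- E2]]]].
      assert (f2 = f1) by (apply (t_loc_inj Hc); [exists e2|exists e1|]; auto). subst. f_equal; eauto.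
  - rewrite !tunion_image_t; auto.
    exists (img_rel s phi1), (img_rel s phi2).
    split; [apply Hsym; auto|split; [apply Hsym; auto|]].
    rewrite !dom_img, !cod_img.
    rewrite (set_ext H1), (set_ext H2), (set_ext H3), (set_ext H4).
    split; [tauto|split; [tauto|split; [tauto|split; [tauto|]]]].
    intros x y [e [f [Hef [<- <-]]]]. rewrite !t_top; simpl.
    destruct (W _ _ Hef); split; apply img_pair; auto.
Qed.

Lemma t_map : essp_map (A := tilde S) (B := tilde A) tmap.
Proof.
  split; [apply tilde_essp; auto|split; [apply tilde_essp; auto|split; [|split]]].
  - split.
    + intros x Hx. apply image_t_TC; auto.
    + intros x Hx a a' Ha Ha' E. apply (t_loc_inj Hx Ha Ha' E).
  - intro e; simpl; apply Hpol.
  - intros Phi H; apply t_hs; auto.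
Qed.

End Map.

Lemma dom_or {T} (r r' : rel T) x : dom (fun a b => r a b \/ r' a b) x <-> dom r x \/ dom r' x.
Proof. unfold dom; split; [intros [b [h|h]]; eauto|intros [[b h]|[b h]]; eauto]. Qed.
Lemma cod_or {T} (r r' : rel T) x : cod (fun a b => r a b \/ r' a b) x <-> cod r x \/ cod r' x.
Proof. unfold cod; split; [intros [b [h|h]]; eauto|intros [[b h]|[b h]]; eauto]. Qed.
Lemma dom_tunion_or (A : essp) (X Y : tev A -> Prop) x :
  dom (tunion (fun e => X e \/ Y e)) x <-> dom (tunion X) x \/ dom (tunion Y) x.
Proof. unfold dom, tunion; split; [intros [b [e [[h|h] E]]]; eauto|intros [[b [e [h E]]]|[b [e [h E]]]]; eauto]. Qed.
Lemma cod_tunion_or (A : essp) (X Y : tev A -> Prop) x :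
  cod (tunion (fun e => X e \/ Y e)) x <-> cod (tunion X) x \/ cod (tunion Y) x.
Proof. unfold cod, tunion; split; [intros [b [e [[h|h] E]]]; eauto|intros [[b [e [h E]]]|[b [e [h E]]]]; eauto]. Qed.
Lemma dom_Or {T} (r r' : rel T) : dom (fun a b => r a b \/ r' a b) = fun x => dom r x \/ dom r' x.
Proof. apply set_ext; intro; apply dom_or. Qed.
Lemma cod_Or {T} (r r' : rel T) : cod (fun a b => r a b \/ r' a b) = fun x => cod r x \/ cod r' x.
Proof. apply set_ext; intro; apply cod_or. Qed.

Section Thin.
Variable S : essp.
Hypothesis HS : is_essp S.

Lemma imm_fst (e e' : tev S) : imm (E := tilde_esp S) e e' -> imm (fst (ttop e)) (fst (ttop e')).
Proof.
  intros [Hlt Hno]. split; [apply tev_lt; auto|].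
  intros [c [[Hl1 Hn1] [Hl2 Hn2]]]. apply Hno.
  assert (Hs' := tev_sym e').
  assert (Hc : dom (trel e') c).
  { eapply config_down; [apply (sym_dom HS Hs')|exists (snd (ttop e')); apply tev_top|auto]. }
  destruct Hc as [d Hcd]. destruct (ex_prime HS Hs' Hcd) as [e'' [Hr Ht]].
  assert (Hsub'' : subrel (trel e'') (trel e')) by (rewrite Hr; intros u v [h _]; auto).
  exists e''; split; split.
  - simpl. apply (tev_le_of HS Hs'); [apply (proj1 Hlt)|auto|]. rewrite Ht; auto.
  - intro E; subst. apply Hn1. rewrite Ht; auto.
  - simpl; auto.
  - intro E; subst. apply Hn2. rewrite Ht; auto.
Qed.

Lemma TC_or (X Y : tev S -> Prop) w : TC X -> TC Y -> sym S w ->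
  (forall e, X e \/ Y e -> subrel (trel e) w) -> TC (fun e => X e \/ Y e).
Proof.
  intros HX HY Hw Hs. apply TC_unfold in HX, HY. apply TC_unfold.
  destruct HX as [Fx [Dx _]], HY as [Fy [Dy _]].
  split; [apply finite_union; auto|split].
  - intros e e' [h|h] Hl; [left; eauto|right; eauto].
  - exists w; auto.
Qed.

Lemma wit_pos (Phi Phi1 : rel (tev S)) phi1 phi2 psi1 psi2 :
  hs_wit Phi phi1 phi2 -> hs_wit Phi1 psi1 psi2 -> pos_ext (E := tilde_esp S) Phi Phi1 ->
  subrel phi1 psi1 /\ subrel phi2 psi2 /\ pos_ext phi1 psi1 /\ pos_ext phi2 psi2.
Proof.
  intros [Hp1 [Hp2 [H1 [H2 [H3 [H4 W]]]]]] [Hq1 [Hq2 [G1 [G2 [G3 [G4 V]]]]]] [Hsub Hpos].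
  simpl in Hpos.
  assert (S1 : subrel phi1 psi1).
  { intros a a' Ha. assert (Hd : dom phi1 a) by (exists a'; auto). apply H1, dom_tunion in Hd.
    destruct Hd as [e [[f Hef] <-]]. rewrite (sym_fun HS Hp1 Ha (proj1 (W _ _ Hef))).
    apply (V _ _ (Hsub _ _ Hef)). }
  assert (S2 : subrel phi2 psi2).
  { intros a a' Ha. assert (Hd : dom phi2 a) by (exists a'; auto). apply H3, cod_tunion in Hd.
    destruct Hd as [e [[f Hef] <-]]. rewrite (sym_fun HS Hp2 Ha (proj2 (W _ _ Hef))).
    apply (V _ _ (Hsub _ _ Hef)). }
  split; auto; split; auto; split; split; auto.
  - intros a a' Ha Hn. assert (Hd : dom psi1 a) by (exists a'; auto). apply G1, dom_tunion in Hd.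
    destruct Hd as [e [[f Hef] <-]]. apply (Hpos _ f Hef). intro Hef'.
    apply Hn. rewrite (sym_fun HS Hq1 Ha (proj1 (V _ _ Hef))). apply (W _ _ Hef').
  - intros b b' Hb Hn. assert (Hd : dom psi2 b) by (exists b'; auto). apply G3, cod_tunion in Hd.
    destruct Hd as [e [[f Hef] <-]].
    rewrite <- (sym_pol HS (tev_sym e) (tev_top e)).
    apply (Hpos _ f Hef). intro Hef'.
    apply Hn. rewrite (sym_fun HS Hq2 Hb (proj2 (V _ _ Hef))). apply (W _ _ Hef').
Qed.

Hypothesis Hthin : thin S.

Lemma tilde_thin : thin (tilde S).
Proof.
  intros Phi Phi1 Phi2 H H1 H2 Hpe1 Hpe2 [Z [HZ [Hz1 Hz2]]].
  change (TC Z) in HZ.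
  apply hs_iff in H; destruct H as [Hd [Hc [Hb0 [phi1 [phi2 Hw]]]]].
  apply hs_iff in H1; destruct H1 as [Hd1 [Hc1 [Hb1 [psi1 [psi2 Hw1]]]]].
  apply hs_iff in H2; destruct H2 as [Hd2 [Hc2 [Hb2 [chi1 [chi2 Hw2]]]]].
  destruct (wit_pos Hw Hw1 Hpe1) as [_ [_ [Q1 Q2]]].
  destruct (wit_pos Hw Hw2 Hpe2) as [_ [_ [R1 R2]]].
  assert (Hch1 := hs_cod_char HS Hw1). assert (Hch2 := hs_cod_char HS Hw2).
  destruct Hw as [Hp1 [Hp2 _]].
  destruct Hw1 as [Hq1 [Hq2 [G1 [G2 [G3 [G4 V]]]]]].
  destruct Hw2 as [Hr1 [Hr2 [K1 [K2 [K3 [K4 U]]]]]].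
  assert (HzS := tunion_sym HS HZ).
  assert (Hsubz1 : subrel (tunion (dom Phi1)) (tunion Z)) by (intros a b [e [He Et]]; exists e; split; auto).
  assert (Hsubz2 : subrel (tunion (dom Phi2)) (tunion Z)) by (intros a b [e [He Et]]; exists e; split; auto).
  assert (HP1 : sym S (fun a b => psi1 a b \/ chi1 a b)).
  { apply (Hthin Hp1 Hq1 Hr1 Q1 R1). exists (dom (tunion Z)); split; [apply (sym_dom HS HzS)|split].
    - intros a Ha. apply G1 in Ha. destruct Ha as [b Hab]; exists b; auto.
    - intros a Ha. apply K1 in Ha. destruct Ha as [b Hab]; exists b; auto. }
  assert (HP2 : sym S (fun a b => psi2 a b \/ chi2 a b)).
  { apply (Hthin Hp2 Hq2 Hr2 Q2 R2). exists (cod (tunion Z)); split; [apply (sym_cod HS HzS)|split].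
    - intros b Hb. apply G3 in Hb. destruct Hb as [a Hab]; exists a; auto.
    - intros b Hb. apply K3 in Hb. destruct Hb as [a Hab]; exists a; auto. }
  set (Ps1 := fun a b => psi1 a b \/ chi1 a b) in *.
  set (Ps2 := fun a b => psi2 a b \/ chi2 a b) in *.
  assert (HdO : TC (fun e => dom Phi1 e \/ dom Phi2 e)).
  { apply (TC_or Hd1 Hd2 HzS). intros e Hor. apply tunion_sub; auto. destruct Hor; auto. }
  set (eta := tunion (fun e => dom Phi1 e \/ dom Phi2 e)).
  assert (Heta : sym S eta) by (apply tunion_sym; auto).
  assert (Hc2' : sym S (comp eta Ps2)).
  { apply (iso_comp (HI HS) Heta HP2). intro b. unfold eta. rewrite cod_tunion_or.
    unfold Ps2; rewrite dom_or, G3, K3. tauto. }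
  assert (Heta' : sym S (comp (inv Ps1) (comp eta Ps2))).
  { apply (iso_comp (HI HS) (sym_inv HS HP1) Hc2'). intro a. change (cod (inv Ps1) a) with (dom Ps1 a).
    split.
    - intro h. assert (h' := h). unfold Ps1 in h'. rewrite dom_or, G1, K1, <- dom_tunion_or in h'.
      destruct h' as [b Hab]. assert (Hb : dom Ps2 b).
      { unfold Ps2; rewrite dom_or, G3, K3, <- cod_tunion_or. exists a; auto. }
      destruct Hb as [c Hbc]; exists c, b; auto.
    - intros [c [b [Hab _]]]. unfold Ps1; rewrite dom_or, G1, K1, <- dom_tunion_or. exists b; auto. }
  set (eta' := comp (inv Ps1) (comp eta Ps2)) in *.
  assert (Hyi : forall f, cod Phi1 f \/ cod Phi2 f -> subrel (trel f) eta').
  { intros f Hf u v Huv. destruct Hf as [Hf|Hf].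
    - assert (T : tunion (cod Phi1) u v) by (apply (tunion_sub HS (e := f) Hc1); auto).
      apply Hch1 in T. destruct T as [a [b [Ha [Hab Hbb]]]].
      exists a; split; [left; auto|]. exists b; split; [|left; auto].
      destruct Hab as [e [He Et]]; exists e; split; auto.
    - assert (T : tunion (cod Phi2) u v) by (apply (tunion_sub HS (e := f) Hc2); auto).
      apply Hch2 in T. destruct T as [a [b [Ha [Hab Hbb]]]].
      exists a; split; [right; auto|]. exists b; split; [|right; auto].
      destruct Hab as [e [He Et]]; exists e; split; auto. }
  assert (HcO : TC (fun e => cod Phi1 e \/ cod Phi2 e)) by (apply (TC_or Hc1 Hc2 Heta' Hyi)).
  assert (HW : forall e f, Phi1 e f \/ Phi2 e f ->
             Ps1 (fst (ttop e)) (fst (ttop f)) /\ Ps2 (snd (ttop e)) (snd (ttop f))).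
  { intros e f [h|h]; [destruct (V _ _ h)|destruct (U _ _ h)]; split; [left|left|right|right]; auto. }
  apply hs_iff; unfold hs_wit; rewrite dom_Or, cod_Or.
  split; auto; split; auto; split.
  - split.
    + intros e f f' Hf Hf'. apply (tev_uniq HS Heta'); [apply Hyi|apply Hyi|].
      * destruct Hf; [left|right]; exists e; auto.
      * destruct Hf'; [left|right]; exists e; auto.
      * apply (sym_fun HS HP1 (proj1 (HW _ _ Hf)) (proj1 (HW _ _ Hf'))).
    + intros e e' f He He'. apply (tev_uniq HS HzS); [apply tunion_sub; auto|apply tunion_sub; auto|].
      * destruct He; [apply Hz1|apply Hz2]; exists f; auto.
      * destruct He'; [apply Hz1|apply Hz2]; exists f; auto.
      * apply (sym_inj HS HP1 (proj1 (HW _ _ He)) (proj1 (HW _ _ He'))).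
  - exists Ps1, Ps2; split; auto; split; auto.
    split; [|split; [|split; [|split]]].
    + intro a; unfold Ps1; rewrite dom_or, dom_tunion_or, G1, K1; tauto.
    + intro a; unfold Ps1; rewrite cod_or, dom_tunion_or, G2, K2; tauto.
    + intro a; unfold Ps2; rewrite dom_or, cod_tunion_or, G3, K3; tauto.
    + intro a; unfold Ps2; rewrite cod_or, cod_tunion_or, G4, K4; tauto.
    + exact HW.
Qed.

End Thin.

Section Court.
Variables S A : essp.
Variable s : ev S -> ev A.
Hypothesis HS : is_essp S.
Hypothesis HA : is_essp A.
Hypothesis Hmap : es_map s.
Hypothesis Hpol : forall a, pol (s a) = pol a.
Hypothesis Hsym : forall th, sym S th -> sym A (img_rel s th).
Hypothesis Hcourt : courteous s.

Lemma t_courteous : courteous (S := tilde S) (A := tilde A) (tmap HA Hsym).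
Proof.
  intros e e' Himm Hp. simpl in Hp.
  assert (Hi := imm_fst HS Himm).
  assert (Hi' := Hcourt Hi Hp).
  destruct Hi' as [[Hle Hne] Hno].
  assert (Hsub : subrel (trel e) (trel e')) by apply (proj1 (proj1 Himm)).
  split; [split|].
  - simpl. apply (tev_le_of HA (th := img_rel s (trel e'))); [apply Hsym, tev_sym| | |].
    + apply t_sub; auto.
    + apply t_sub; intros u v h; exact h.
    + rewrite !t_top; auto.
  - intro E. apply Hne. assert (H := f_equal (fun z => fst (ttop z)) E). simpl in H; exact H.
  - intros [f [H1 H2]]. apply Hno. exists (fst (ttop f)).
    apply (tev_lt HA) in H1. apply (tev_lt HA) in H2. rewrite t_top in H1, H2. simpl in *; auto.
Qed.

End Court.

Lemma dom_ext {T} (r : rel T) a b x : dom (ext r a b) x <-> dom r x \/ x = a.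
Proof. unfold dom, ext; split; [intros [y [h|[h _]]]; eauto|intros [[y h]|h]; eauto]. Qed.
Lemma cod_ext {T} (r : rel T) a b x : cod (ext r a b) x <-> cod r x \/ x = b.
Proof. unfold cod, ext; split; [intros [y [h|[_ h]]]; eauto|intros [[y h]|h]; eauto]. Qed.
Lemma dom_Ext {T} (r : rel T) a b : dom (ext r a b) = fun x => dom r x \/ x = a.
Proof. apply set_ext; intro; apply dom_ext. Qed.
Lemma cod_Ext {T} (r : rel T) a b : cod (ext r a b) = fun x => cod r x \/ x = b.
Proof. apply set_ext; intro; apply cod_ext. Qed.
Lemma tunion_add (A : essp) (X : tev A -> Prop) a u v :
  tunion (fun e => X e \/ e = a) u v <-> tunion X u v \/ (u = fst (ttop a) /\ v = snd (ttop a)).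
Proof.
  unfold tunion; split.
  - intros [e [[h| ->] E]]; [left; eauto|right; rewrite E; auto].
  - intros [[e [h E]]|[-> ->]]; [exists e; auto|exists a; split; auto; destruct (ttop a); auto].
Qed.

Section Recep.
Variables S A : essp.
Variable s : ev S -> ev A.
Hypothesis HS : is_essp S.
Hypothesis HA : is_essp A.
Hypothesis Hmap : es_map s.
Hypothesis Hpol : forall a, pol (s a) = pol a.
Hypothesis Hsym : forall th, sym S th -> sym A (img_rel s th).
Hypothesis Hrec : strong_receptive s.

Lemma recep_unique (x : ev S -> Prop) y y' : config x -> config (fun z => x z \/ z = y) ->
  config (fun z => x z \/ z = y') -> s y = s y' -> pol y = false -> ~ image s x (s y) -> y = y'.
Proof.
  intros Hx Hy Hy' Es Hp Hn.
  assert (Hid : sym S (fun a b => x a /\ a = b)) by (apply (iso_id (HI HS)); auto).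
  assert (Hext : forall z, config (fun w => x w \/ w = z) ->
            ext (fun a b => x a /\ a = b) z z = (fun a b => (fun w => x w \/ w = z) a /\ a = b)).
  { intros z Hz; apply rel_ext; intros a b; unfold ext; split.
    - intros [[h ->]|[-> ->]]; auto.
    - intros [[h| ->] ->]; auto. }
  assert (HI' : img_rel s (fun a b => x a /\ a = b) = fun u v => image s x u /\ u = v).
  { apply rel_ext; intros u v; split.
    - intros [a [b [[h <-] [<- <-]]]]; split; auto; exists a; auto.
    - intros [[a [h <-]] <-]; exists a, a; auto. }
  assert (P1 : pol (s y) = false) by (rewrite Hpol; auto).
  assert (P3 : ~ dom (img_rel s (fun a b => x a /\ a = b)) (s y)) by (rewrite HI'; intros [v [h _]]; auto).
  assert (P4 : sym A (ext (img_rel s (fun a b => x a /\ a = b)) (s y) (s y))).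
  { rewrite HI'. assert (E : ext (fun u v => image s x u /\ u = v) (s y) (s y) =
                     fun u v => image s (fun z => x z \/ z = y) u /\ u = v).
    { apply rel_ext; intros u v; unfold ext; split.
      - intros [[[a [h E]] E']|[E E']]; subst; [split; auto; exists a; auto|split; auto; exists y; auto].
      - intros [[a [[h| E] E']] E'']; subst; [left; split; auto; exists a; auto|right; auto]. }
    rewrite E. apply (iso_id (HI HA)). apply (proj1 Hmap); auto. }
  destruct (Hrec Hid P1 P1 P3 P4) as [[p1 p2] [_ Hu]].
  { assert (E1 := Hu (y, y)). assert (E2 := Hu (y', y')). simpl in E1, E2.
    rewrite (Hext y Hy) in E1. rewrite (Hext y' Hy') in E2.
    assert (T1 : (p1, p2) = (y, y)) by (apply E1; split; [apply (iso_id (HI HS)); auto|auto]).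
    assert (T2 : (p1, p2) = (y', y')) by (apply E2; split; [apply (iso_id (HI HS)); auto|rewrite <- Es; auto]).
    rewrite T1 in T2; injection T2; auto. }
Qed.


Local Notation t := (tmap HA Hsym).

Lemma t_recep' (Phi : rel (tev S)) : higher_sym Phi -> forall a1 a2 : tev A,
  pol (fst (ttop a1)) = false -> pol (fst (ttop a2)) = false -> ~ dom (img_rel t Phi) a1 ->
  higher_sym (ext (img_rel t Phi) a1 a2) ->
  exists! p : tev S * tev S, higher_sym (ext Phi (fst p) (snd p)) /\ t (fst p) = a1 /\ t (snd p) = a2.
Proof.
  intros HPhi a1 a2 Hpa1 Hpa2 Hnd Hext.
  assert (HPhi' := HPhi).
  apply hs_iff in HPhi'; destruct HPhi' as [Hd [Hc [[Hb1 Hb2] [phi1 [phi2 Hw]]]]].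
  assert (Hch := hs_cod_char HS Hw).
  destruct Hw as [Hp1 [Hp2 [H1 [H2 [H3 [H4 W]]]]]].
  set (X := dom Phi) in *. set (Y := cod Phi) in *.
  set (th := tunion X) in *. set (th' := tunion Y) in *.
  assert (Hth : sym S th) by (apply tunion_sym; auto).
  assert (Hth' : sym S th') by (apply tunion_sym; auto).
  set (c := fst (ttop a1)). set (d := snd (ttop a1)).
  set (c' := fst (ttop a2)). set (d' := snd (ttop a2)).
  assert (Hext' := Hext).
  apply hs_iff in Hext'; destruct Hext' as [HdP [HcP [[Hc1 Hc2] [psi1 [psi2 Hw']]]]].
  destruct Hw' as [Hq1 [Hq2 [G1 [G2 [G3 [G4 V]]]]]].
  set (Psi := ext (img_rel t Phi) a1 a2) in *.
  assert (EdP : dom Psi = fun f => image t X f \/ f = a1).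
  { unfold Psi; rewrite dom_Ext, dom_img; auto. }
  assert (EcP : cod Psi = fun f => image t Y f \/ f = a2).
  { unfold Psi; rewrite cod_Ext, cod_img; auto. }
  rewrite EdP in G1, G3, HdP. rewrite EcP in G2, G4, HcP.
  assert (Htx : TC X) by exact Hd. assert (Hty : TC Y) by exact Hc.
  assert (Hzeta : sym A (tunion (fun f => image t X f \/ f = a1))) by (apply tunion_sym; auto).
  assert (Zch : forall u v, tunion (fun f => image t X f \/ f = a1) u v <-> img_rel s th u v \/ (u = c /\ v = d)).
  { intros u v; rewrite tunion_add, tunion_image_t; auto. tauto. }
  assert (Hzeta' : sym A (tunion (fun f => image t Y f \/ f = a2))) by (apply tunion_sym; auto).
  assert (Zch' : forall u v, tunion (fun f => image t Y f \/ f = a2) u v <-> img_rel s th' u v \/ (u = c' /\ v = d')).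
  { intros u v; rewrite tunion_add, tunion_image_t; auto. tauto. }
  assert (Hnd' : ~ image t X a1) by (intro h; apply Hnd; unfold Psi in *; rewrite dom_img; auto).
  assert (PsiL : forall e f, Phi e f -> Psi (t e) (t f)) by (intros e f h; left; exists e, f; auto).
  assert (PsiR : Psi a1 a2) by (right; auto).
  assert (Hcf : ~ dom (img_rel s th) c).
  { intros [v Hv]. assert (Hv0 : tunion (image t X) c v) by (rewrite (tunion_image_t HS HA Hsym Htx); exact Hv). clear Hv; rename Hv0 into Hv.
    destruct Hv as [f [Hf Hft]]. apply Hnd'.
    replace a1 with f; auto. apply (tev_uniq HA Hzeta); try apply tunion_sub; auto.
    rewrite Hft; auto. }
  assert (Hzcd : tunion (fun f => image t X f \/ f = a1) c d) by (apply Zch; auto).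
  assert (Hdf : ~ cod (img_rel s th) d).
  { intros [u Hu]. apply Hcf. assert (Hu' : tunion (fun f => image t X f \/ f = a1) u d) by (apply Zch; auto).
    rewrite <- (sym_inj HA Hzeta Hu' Hzcd). exists d; auto. }
  assert (Hpd : pol d = false) by (rewrite <- (sym_pol HA Hzeta Hzcd); auto).
  assert (Hsz : sym A (ext (img_rel s th) c d)).
  { replace (ext (img_rel s th) c d) with (tunion (fun f => image t X f \/ f = a1)); auto.
    apply rel_ext; intros u v; rewrite Zch; unfold ext; tauto. }
  destruct (Hrec Hth Hpa1 Hpd Hcf Hsz) as [[sc sd] [[Hth1 [Esc Esd]] Hu0]]. simpl in Hth1, Esc, Esd. change (s sc = c) in Esc. change (s sd = d) in Esd.
  set (th1 := ext th sc sd) in *.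
  assert (Hscf : ~ dom th sc).
  { intros [v Hv]. apply Hcf. exists (s v). rewrite <- Esc. apply img_pair; auto. }
  assert (Hsdf : ~ cod th sd).
  { intros [u Hu]. apply Hdf. exists (s u). rewrite <- Esd. apply img_pair; auto. }
  assert (Ph1 : forall a, dom th a -> exists e f, Phi e f /\ fst (ttop e) = a).
  { intros a Ha. apply dom_tunion in Ha. destruct Ha as [e [[f Hef] <-]]. eauto. }
  assert (Ph2 : forall b, cod th b -> exists e f, Phi e f /\ snd (ttop e) = b).
  { intros b Hb. apply cod_tunion in Hb. destruct Hb as [e [[f Hef] <-]]. eauto. }
  assert (Epsi1 : psi1 = ext (img_rel s phi1) c c').
  { apply rel_ext; intros u v; split.
    - intro h. assert (hd : dom psi1 u) by (exists v; auto). apply G1 in hd.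
      apply dom_tunion in hd. destruct hd as [f [[[e [He <-]]| ->] <-]].
      + left. destruct He as [f0 Hef0]. assert (T := proj1 (V _ _ (PsiL _ _ Hef0))).
        rewrite !t_top in T. simpl in T. rewrite t_top in h; simpl in h.
        rewrite (sym_fun HA Hq1 h T). apply img_pair, (W _ _ Hef0).
      + right; split; auto. apply (sym_fun HA Hq1 h (proj1 (V _ _ PsiR))).
    - intros [[a [a' [Haa [<- <-]]]]|[-> ->]].
      + assert (Ha : dom th a) by (apply H1; exists a'; auto).
        destruct (Ph1 _ Ha) as [e [f [Hef <-]]].
        rewrite (sym_fun HS Hp1 Haa (proj1 (W _ _ Hef))).
        assert (T := proj1 (V _ _ (PsiL _ _ Hef))). rewrite !t_top in T; exact T.
      + apply (V _ _ PsiR). }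
  assert (Edphi1 : dom (img_rel s phi1) = dom (img_rel s th)).
  { rewrite !dom_img. f_equal. apply set_ext; auto. }
  assert (Ecphi2 : dom (img_rel s phi2) = cod (img_rel s th)).
  { rewrite dom_img, cod_img. f_equal. apply set_ext; auto. }
  assert (Hpc' : pol c' = false) by (unfold c'; rewrite <- (sym_pol HA Hq1 (proj1 (V _ _ PsiR))); auto).
  assert (Hcf1 : ~ dom (img_rel s phi1) c) by (rewrite Edphi1; auto).
  assert (Hs1 : sym A (ext (img_rel s phi1) c c')) by (rewrite <- Epsi1; auto).
  destruct (Hrec Hp1 Hpa1 Hpc' Hcf1 Hs1) as [[x1 x2] [[Hphi1 [Ex1 Ex2]] Hu1]]. simpl in Hphi1, Ex1, Ex2. change (s x1 = c) in Ex1. change (s x2 = c') in Ex2.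
  assert (Edth1 : dom th1 = fun z => dom th z \/ z = sc) by (apply dom_Ext).
  assert (Ecth1 : cod th1 = fun z => cod th z \/ z = sd) by (apply cod_Ext).
  assert (Ex1' : x1 = sc).
  { symmetry. apply (recep_unique (x := dom th)); auto.
    - apply (sym_dom HS Hth).
    - rewrite <- Edth1. apply (sym_dom HS Hth1).
    - replace (fun z => dom th z \/ z = x1) with (dom (ext phi1 x1 x2)); [apply (sym_dom HS Hphi1)|].
      rewrite dom_Ext. apply set_ext; intro z; rewrite H1; tauto.
    - congruence.
    - rewrite <- Hpol, Esc; auto.
    - rewrite Esc. rewrite <- dom_img. auto. }
  subst x1.
  assert (Epsi2 : psi2 = ext (img_rel s phi2) d d').
  { apply rel_ext; intros u v; split.
    - intro h. assert (hd : dom psi2 u) by (exists v; auto). apply G3 in hd.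
      apply cod_tunion in hd. destruct hd as [f [[[e [He <-]]| ->] <-]].
      + left. destruct He as [f0 Hef0]. assert (T := proj2 (V _ _ (PsiL _ _ Hef0))).
        rewrite !t_top in T. simpl in T. rewrite t_top in h; simpl in h.
        rewrite (sym_fun HA Hq2 h T). apply img_pair, (W _ _ Hef0).
      + right; split; auto. apply (sym_fun HA Hq2 h (proj2 (V _ _ PsiR))).
    - intros [[a [a' [Haa [<- <-]]]]|[-> ->]].
      + assert (Ha : cod th a) by (apply H3; exists a'; auto).
        destruct (Ph2 _ Ha) as [e [f [Hef <-]]].
        rewrite (sym_fun HS Hp2 Haa (proj2 (W _ _ Hef))).
        assert (T := proj2 (V _ _ (PsiL _ _ Hef))). rewrite !t_top in T; exact T.
      + apply (V _ _ PsiR). }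
  assert (Hpd' : pol d' = false) by (unfold d'; rewrite <- (sym_pol HA Hq2 (proj2 (V _ _ PsiR))); auto).
  assert (Hdf2 : ~ dom (img_rel s phi2) d) by (rewrite Ecphi2; auto).
  assert (Hs2 : sym A (ext (img_rel s phi2) d d')) by (rewrite <- Epsi2; auto).
  destruct (Hrec Hp2 Hpd Hpd' Hdf2 Hs2) as [[y1 y2] [[Hphi2 [Ey1 Ey2]] Hu2]]. simpl in Hphi2, Ey1, Ey2. change (s y1 = d) in Ey1. change (s y2 = d') in Ey2.
  assert (Ey1' : y1 = sd).
  { symmetry. apply (recep_unique (x := cod th)); auto.
    - apply (sym_cod HS Hth).
    - rewrite <- Ecth1. apply (sym_cod HS Hth1).
    - replace (fun z => cod th z \/ z = y1) with (dom (ext phi2 y1 y2)); [apply (sym_dom HS Hphi2)|].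
      rewrite dom_Ext. apply set_ext; intro z; rewrite H3; tauto.
    - congruence.
    - rewrite <- Hpol, Esd; auto.
    - rewrite Esd. rewrite <- cod_img. auto. }
  subst y1.
  set (ph1 := ext phi1 sc x2) in *. set (ph2 := ext phi2 sd y2) in *.
  assert (Hc12 : sym S (comp th1 ph2)).
  { apply (iso_comp (HI HS) Hth1 Hphi2). intro b. rewrite Ecth1. unfold ph2; rewrite dom_ext, H3. tauto. }
  assert (Hth1' : sym S (comp (inv ph1) (comp th1 ph2))).
  { apply (iso_comp (HI HS) (sym_inv HS Hphi1) Hc12). intro a. change (cod (inv ph1) a) with (dom ph1 a).
    unfold ph1; rewrite dom_ext, H1. fold th. split.
    - intro h. assert (h' : dom th1 a) by (rewrite Edth1; auto). destruct h' as [b Hab].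
      assert (Hb : dom ph2 b) by (unfold ph2; rewrite dom_ext, H3; fold th; rewrite <- Ecth1 at 1 || idtac;
                                  change (cod th b \/ b = sd); rewrite <- (f_equal (fun P => P b) Ecth1); exists a; auto).
      destruct Hb as [c0 Hc0]; exists c0, b; auto.
    - intros [c0 [b [Hab _]]]. assert (h : dom th1 a) by (exists b; auto). rewrite Edth1 in h; auto. }
  set (th1' := comp (inv ph1) (comp th1 ph2)) in *.
  assert (T1ch : forall u v, th1' u v <-> th' u v \/ (u = x2 /\ v = y2)).
  { intros u v; unfold th1', comp, inv; rewrite Hch. split.
    - intros [a [Ha [b [Hab Hbv]]]].
      unfold ph1, ph2, ext in Ha, Hbv. unfold th1, ext in Hab.
      destruct Ha as [Ha|[E1 E2]]; destruct Hab as [Hab|[E3 E4]]; destruct Hbv as [Hbv|[E5 E6]]; subst.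
      + left; eauto 7.
      + exfalso; apply Hsdf; exists a; auto.
      + exfalso; apply Hscf; apply H1; exists u; auto.
      + exfalso; apply Hscf; apply H1; exists u; auto.
      + exfalso; apply Hscf; exists b; auto.
      + exfalso; apply Hscf; exists sd; auto.
      + exfalso; apply Hsdf; apply H3; exists v; auto.
      + right; auto.
    - intros [[a [b [Ha [Hab Hbv]]]]|[-> ->]].
      + exists a; split; [left; auto|]. exists b; split; left; auto.
      + exists sc; split; [right; auto|]. exists sd; split; right; auto. }
  destruct (ex_prime HS Hth1 (a := sc) (b := sd)) as [p1 [Rp1 Tp1]]; [right; auto|].
  destruct (ex_prime HS Hth1' (a := x2) (b := y2)) as [p2 [Rp2 Tp2]]; [apply T1ch; auto|].
  assert (Sp1 : subrel (trel p1) th1) by (rewrite Rp1; intros u v [h _]; auto).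
  assert (Sp2 : subrel (trel p2) th1') by (rewrite Rp2; intros u v [h _]; auto).
  assert (Tp1eq : t p1 = a1).
  { apply (tev_uniq HA Hzeta).
    - intros u v h. apply Zch. apply (t_sub (th := th1)) in h; auto.
      destruct h as [a [b [[Hab|[-> ->]] [<- <-]]]]; [left; apply img_pair; auto|right; auto].
    - apply tunion_sub; auto.
    - rewrite t_top, Tp1; simpl; auto. }
  assert (Tp2eq : t p2 = a2).
  { apply (tev_uniq HA Hzeta').
    - intros u v h. apply Zch'. apply (t_sub (th := th1')) in h; auto.
      destruct h as [a [b [Hab [<- <-]]]]. apply T1ch in Hab.
      destruct Hab as [Hab|[-> ->]]; [left; apply img_pair; auto|right; auto].
    - apply tunion_sub; auto.
    - rewrite t_top, Tp2; simpl; auto. }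
  assert (Hp1X : ~ X p1) by (intro h; apply Hnd'; exists p1; auto).
  assert (Hp2Y : ~ Y p2).
  { intros [e He]. apply Hnd'. assert (T := PsiL _ _ He). rewrite Tp2eq in T.
    rewrite <- (Hc2 _ _ _ T PsiR). exists e; split; auto. exists p2; auto. }
  assert (EX1 : (fun e => X e \/ e = p1) = primes th1).
  { apply set_ext; intro e; split.
    - intros [h| ->]; auto. intros u v huv; left. apply (tunion_sub HS Htx h); auto.
    - intro h. assert (T := h _ _ (tev_top e)). destruct T as [T|[E1 _]].
      + left. assert (Hde : dom th (fst (ttop e))) by (exists (snd (ttop e)); auto).
        apply dom_tunion in Hde. destruct Hde as [e0 [He0 E0]].
        replace e with e0; auto. apply (tev_uniq HS Hth1); auto.
        intros u v huv; left; apply (tunion_sub HS Htx He0); auto.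
      + right. apply (tev_uniq HS Hth1); auto. rewrite Tp1; auto. }
  assert (EY1 : (fun e => Y e \/ e = p2) = primes th1').
  { apply set_ext; intro e; split.
    - intros [h| ->]; auto. intros u v huv; apply T1ch; left. apply (tunion_sub HS Hty h); auto.
    - intro h. assert (T := h _ _ (tev_top e)). apply T1ch in T. destruct T as [T|[E1 _]].
      + left. assert (Hde : dom th' (fst (ttop e))) by (exists (snd (ttop e)); auto).
        apply dom_tunion in Hde. destruct Hde as [e0 [He0 E0]].
        replace e with e0; auto. apply (tev_uniq HS Hth1'); auto.
        intros u v huv; apply T1ch; left; apply (tunion_sub HS Hty He0); auto.
      + right. apply (tev_uniq HS Hth1'); auto. rewrite Tp2; auto. }
  assert (Tu1 : tunion (fun e => X e \/ e = p1) = th1) by (transitivity (tunion (primes th1)); [f_equal; exact EX1|apply tunion_primes; auto]).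
  assert (Tu2 : tunion (fun e => Y e \/ e = p2) = th1') by (transitivity (tunion (primes th1')); [f_equal; exact EY1|apply tunion_primes; auto]).
  exists (p1, p2); split.
  - split; [|simpl; auto].
    apply hs_iff; unfold hs_wit. cbn [fst snd].
    rewrite dom_Ext, cod_Ext. change (dom Phi) with X. change (cod Phi) with Y.
        rewrite Tu1, Tu2, EX1, EY1.
    split; [apply primes_config; auto|split; [apply primes_config; auto|split]].
    + split.
      * intros e f f' [h|[E1 E2]] [h'|[E1' E2']]; subst; eauto.
        -- exfalso; apply Hp1X; exists f; auto.
        -- exfalso; apply Hp1X; exists f'; auto.
      * intros e e' f [h|[E1 E2]] [h'|[E1' E2']]; subst; eauto.
        -- exfalso; apply Hp2Y; exists e; auto.
        -- exfalso; apply Hp2Y; exists e'; auto.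
    + exists ph1, ph2; split; auto; split; auto.
      split; [|split; [|split; [|split]]].
      * intro a; unfold ph1; rewrite dom_ext, H1, Edth1; tauto.
      * intro a; unfold ph1; rewrite cod_ext, H2. fold th'. split.
        -- intros [[b h]| ->]; [exists b; apply T1ch; auto|exists y2; apply T1ch; auto].
        -- intros [b h]. apply T1ch in h. destruct h as [h|[-> _]]; [left; exists b; auto|right; auto].
      * intro b; unfold ph2; rewrite dom_ext, H3, Ecth1; tauto.
      * intro b; unfold ph2; rewrite cod_ext, H4. fold th'. split.
        -- intros [[a h]| ->]; [exists a; apply T1ch; auto|exists x2; apply T1ch; auto].
        -- intros [a h]. apply T1ch in h. destruct h as [h|[_ ->]]; [left; exists a; auto|right; auto].
      * intros e f [h|[-> ->]]; [destruct (W _ _ h); split; left; auto|].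
        rewrite Tp1, Tp2; simpl; split; right; auto.
  - intros [q1 q2] [Hq [Eq1 Eq2]]. simpl in Hq, Eq1, Eq2.
    apply hs_iff in Hq. destruct Hq as [HdQ [HcQ [_ [chi1 [chi2 Hwq]]]]].
    destruct Hwq as [Hr1 [Hr2 [K1 [K2 [K3 [K4 U]]]]]].
    rewrite dom_Ext in HdQ, K1, K3. rewrite cod_Ext in HcQ, K2, K4.
    change (dom Phi) with X in HdQ, K1, K3. change (cod Phi) with Y in HcQ, K2, K4.
    assert (Tq1 := f_equal (@ttop A) Eq1). rewrite t_top in Tq1.
    assert (Tq2 := f_equal (@ttop A) Eq2). rewrite t_top in Tq2.
    assert (Hsu : s (fst (ttop q1)) = c) by (unfold c; rewrite <- Tq1; auto).
    assert (Hsv : s (snd (ttop q1)) = d) by (unfold d; rewrite <- Tq1; auto).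
    assert (Hsu2 : s (fst (ttop q2)) = c') by (unfold c'; rewrite <- Tq2; auto).
    assert (Hsv2 : s (snd (ttop q2)) = d') by (unfold d'; rewrite <- Tq2; auto).
    assert (HQ1 : sym S (tunion (fun e => X e \/ e = q1))) by (apply tunion_sym; auto).
    assert (EQ1 : tunion (fun e => X e \/ e = q1) = ext th (fst (ttop q1)) (snd (ttop q1))).
    { apply rel_ext; intros u v; rewrite tunion_add; unfold ext; tauto. }
    assert (Eu : (sc, sd) = (fst (ttop q1), snd (ttop q1))).
    { apply Hu0; simpl; split; auto. rewrite <- EQ1; auto. }
    injection Eu; intros Ev Eu'.
    assert (Eq1' : q1 = p1).
    { apply (tev_uniq HS HQ1).
      - apply tunion_sub; auto.
      - rewrite EQ1, <- Eu', <- Ev. auto.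
      - rewrite Tp1; simpl; auto. }
    subst q1.
    assert (Echi1 : chi1 = ext phi1 sc (fst (ttop q2))).
    { apply rel_ext; intros u v; split.
      - intro h. assert (hd : dom chi1 u) by (exists v; auto). apply K1 in hd.
        apply dom_tunion in hd. destruct hd as [e [[He| ->] <-]].
        + left. destruct He as [f Hef]. assert (T := proj1 (U _ _ (or_introl Hef))).
          rewrite (sym_fun HS Hr1 h T). apply (W _ _ Hef).
        + right. rewrite Tp1; split; auto. apply (sym_fun HS Hr1 h).
          assert (T := proj1 (U p1 q2 (or_intror (conj eq_refl eq_refl)))). rewrite Tp1 in *; exact T.
      - intros [h|[-> ->]].
        + assert (Ha : dom th u) by (apply H1; exists v; auto).
          destruct (Ph1 _ Ha) as [e [f [Hef <-]]].
          rewrite (sym_fun HS Hp1 h (proj1 (W _ _ Hef))). apply (U _ _ (or_introl Hef)).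
        + assert (T := proj1 (U p1 q2 (or_intror (conj eq_refl eq_refl)))). rewrite Tp1 in *; exact T. }
    assert (Ex2q : (sc, x2) = (sc, fst (ttop q2))).
    { apply Hu1; simpl; split; [rewrite <- Echi1; auto|split; auto]. }
    injection Ex2q; intro Ex2q'.
    assert (Echi2 : chi2 = ext phi2 sd (snd (ttop q2))).
    { apply rel_ext; intros u v; split.
      - intro h. assert (hd : dom chi2 u) by (exists v; auto). apply K3 in hd.
        apply cod_tunion in hd. destruct hd as [e [[He| ->] <-]].
        + left. destruct He as [f Hef]. assert (T := proj2 (U _ _ (or_introl Hef))).
          rewrite (sym_fun HS Hr2 h T). apply (W _ _ Hef).
        + right. rewrite Tp1; split; auto. apply (sym_fun HS Hr2 h).
          assert (T := proj2 (U p1 q2 (or_intror (conj eq_refl eq_refl)))). rewrite Tp1 in *; exact T.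
      - intros [h|[-> ->]].
        + assert (Ha : cod th u) by (apply H3; exists v; auto).
          destruct (Ph2 _ Ha) as [e [f [Hef <-]]].
          rewrite (sym_fun HS Hp2 h (proj2 (W _ _ Hef))). apply (U _ _ (or_introl Hef)).
        + assert (T := proj2 (U p1 q2 (or_intror (conj eq_refl eq_refl)))). rewrite Tp1 in *; exact T. }
    assert (Ey2q : (sd, y2) = (sd, snd (ttop q2))).
    { apply Hu2; simpl; split; [rewrite <- Echi2; auto|split; auto]. }
    injection Ey2q; intro Ey2q'.
    assert (HQ2 : sym S (tunion (fun e => Y e \/ e = q2))) by (apply tunion_sym; auto).
    assert (EQ2 : tunion (fun e => Y e \/ e = q2) = th1').
    { apply rel_ext; intros u v; rewrite tunion_add, T1ch, <- Ex2q', <- Ey2q'. tauto. }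
    f_equal. apply (tev_uniq HS HQ2).
    + rewrite EQ2; auto.
    + apply tunion_sub; auto.
    + rewrite Tp2; simpl; auto.
Qed.

Lemma t_recep : strong_receptive (S := tilde S) (A := tilde A) t.
Proof. intros Phi HPhi a1 a2 Hpa1 Hpa2 Hnd Hext. apply t_recep'; auto. Qed.

End Recep.

Theorem mainTheorem5 (S A : essp) (s : ev S -> ev A) :
  sim_strategy s ->
  exists t : ev (tilde S) -> ev (tilde A),
    tilde_map_spec s t /\ sim_strategy (S := tilde S) (A := tilde A) t.
Proof.
  intros [[HS [HA [Hmap [Hpol Hsym]]]] [Hcourt [Hrec Hthin]]].
  exists (tmap HA Hsym). split; [apply t_spec|].
  split; [apply t_map; auto|split; [apply t_courteous; auto|split; [apply t_recep; auto|apply tilde_thin; auto]]].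
Qed.
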